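(* Let $x \in \mathbb{Z}$ and let $n \in \mathbb{N}$ be odd with $n \geq 5$, and suppose $x^2 + 7 = 2^n$. Then $n - 2 \equiv 3$, $5$, or $13 \pmod{42}$. *)

(* Defs.v *)
From Stdlib Require Import ZArith.

(* Main.v *)
Require Import Defs.
From Stdlib Require Import ZArith Lia.
Open Scope Z_scope.

Fixpoint ab (m : nat) : Z * Z :=
  match m with
  | O => (1, 0)
  | S m => let (a, b) := ab m in (-2 * b, a + b)
  end.

Definition f m := snd (ab m).

Lemma ab_S m : ab (S m) = (-2 * snd (ab m), fst (ab m) + snd (ab m)).
Proof. simpl. destruct (ab m); reflexivity. Qed.

Lemma f_rec m : f (S (S m)) = f (S m) - 2 * f m.
Proof. unfold f. rewrite ab_S. rewrite ab_S. cbn [fst snd]. lia. Qed.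

Lemma fst_ab m : (0 < m)%nat -> exists k, fst (ab m) = 2 * k.
Proof. destruct m; [lia|]. intros _. rewrite ab_S. cbn [fst]. exists (- snd (ab m)). ring. Qed.

Lemma pow_S m : 2 ^ Z.of_nat (S m) = 2 * 2 ^ Z.of_nat m.
Proof. rewrite Nat2Z.inj_succ, Z.pow_succ_r by lia. ring. Qed.

Lemma key : forall m a b, a * a + a * b + 2 * b * b = 2 ^ Z.of_nat m ->
  ~ (exists c d, a = 2 * c /\ b = 2 * d) ->
  exists s, (s = 1 \/ s = -1) /\
   ((a = s * fst (ab m) /\ b = s * snd (ab m)) \/
    (a = s * (fst (ab m) + snd (ab m)) /\ b = - s * snd (ab m))).
Proof.
  induction m as [|m IH]; intros a b Hn Hp.
  - change (2 ^ Z.of_nat 0) with 1 in Hn. cbn [ab fst snd].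
    assert (H4 : (2*a+b)*(2*a+b) + 7*(b*b) = 4) by nia.
    assert (b * b <= 0) by nia.
    assert (b = 0) by nia. subst b.
    assert (Ha : (a - 1) * (a + 1) = 0) by nia.
    apply Z.mul_eq_0 in Ha. exists a. split; [lia|]. left; lia.
  - rewrite pow_S in Hn. set (P := 2 ^ Z.of_nat m) in *.
    rewrite ab_S; cbn [fst snd].
    destruct (Z.Even_or_Odd a) as [[c Hc]|[c Hc]].
    + subst a.
      destruct (IH (c + b) (- c)) as [s [Hs [[H1 H2]|[H1 H2]]]].
      * nia.
      * intros [p [q [E1 E2]]]. apply Hp. exists (-2 * q), (p + q). lia.
      * exists s. split; auto. left. nia.
      * destruct m as [|m].
        -- cbn [ab fst snd] in *. exists s. split; auto. left. nia.
        -- destruct (fst_ab (S m)) as [k Hk]; [lia|].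
           rewrite Hk in *. exfalso. apply Hp.
           exists (s * snd (ab (S m))), (s * k). nia.
    + destruct (Z.Even_or_Odd b) as [[d Hd]|[d Hd]].
      * exfalso. subst a b. nia.
      * subst a b.
        destruct (IH (- (2*d+1)) (c + d + 1)) as [s [Hs [[H1 H2]|[H1 H2]]]].
        -- nia.
        -- intros [p [q [E1 E2]]]. lia.
        -- destruct m as [|m].
           ++ cbn [ab fst snd] in *. exists s. split; auto. right. nia.
           ++ destruct (fst_ab (S m)) as [k Hk]; [lia|].
              rewrite Hk in *. exfalso. apply Hp.
              rewrite ab_S in *. cbn [fst snd] in *. nia.
        -- exists s. split; auto. right. nia.
Qed.

Lemma f_mod4 : forall k, exists u v, f (2*k+3) = 3 + 4*u /\ f (2*k+4) = 1 + 4*v.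
Proof.
  induction k as [|k [u [v [H1 H2]]]].
  - exists (-1), (-1). vm_compute. split; reflexivity.
  - replace (2 * S k + 3)%nat with (S (S (2*k+3))) by lia.
    replace (2 * S k + 4)%nat with (S (S (S (2*k+3)))) by lia.
    replace (2*k+4)%nat with (S (2*k+3)) in H2 by lia.
    rewrite (f_rec (S (2*k+3))), (f_rec (2*k+3)), H1, H2.
    exists (v - 2*u - 2), (v - 2*u - 2 - 2*v). lia.
Qed.

Lemma f_per : forall m, exists k l, f (m+21) = f m + 7*k /\ f (m+22) = f (S m) + 7*l.
Proof.
  induction m as [|m [k [l [H1 H2]]]].
  - exists ((f 21 - f 0)/7), ((f 22 - f 1)/7). vm_compute. split; reflexivity.
  - exists l, (l - 2*k).
    replace (S m + 21)%nat with (m + 22)%nat by lia.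
    replace (S m + 22)%nat with (S (S (m + 21)))%nat by lia.
    rewrite f_rec. replace (S (m+21)) with (m+22)%nat by lia.
    rewrite H1, H2, f_rec. lia.
Qed.

Lemma f_per_q : forall q r, exists k, f (r + 21 * q) = f r + 7 * k.
Proof.
  induction q as [|q IH]; intros r.
  - exists 0. replace (r + 21*0)%nat with r by lia. lia.
  - destruct (IH r) as [k Hk]. destruct (f_per (r + 21*q)) as [k' [_ [H _]]].
    exists (k + k'). replace (r + 21 * S q)%nat with (r + 21*q + 21)%nat by lia. lia.
Qed.

Lemma small : forall r k, (r < 21)%nat -> f r + 7 * k = -1 -> r = 3%nat \/ r = 5%nat \/ r = 13%nat.
Proof.
  intros r k Hr H.
  do 21 (destruct r as [|r]; [ match type of H with context[f ?t] =>
     let v := eval vm_compute in (f t) in change (f t) with v in H end; lia | ]). lia.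
Qed.

Lemma fin n m t : n = (2 * t + 1)%nat -> (5 <= n)%nat -> Z.of_nat n = Z.of_nat m + 2 ->
  f m = 1 \/ f m = -1 ->
  (Z.of_nat n - 2) mod 42 = 3 \/ (Z.of_nat n - 2) mod 42 = 5 \/
  (Z.of_nat n - 2) mod 42 = 13.
Proof.
  intros Ht Hn Hm Hf.
  assert (Hk : m = (2 * (t - 2) + 3)%nat) by lia.
  destruct Hf as [Hf|Hf].
  { exfalso. destruct (f_mod4 (t-2)) as [u [v [E _]]]. rewrite <- Hk in E. lia. }
  pose proof (Nat.div_mod m 21 ltac:(lia)) as Hd.
  pose proof (Nat.mod_upper_bound m 21 ltac:(lia)) as Hr.
  set (q := (m / 21)%nat) in *. set (r := (m mod 21)%nat) in *.
  destruct (f_per_q q r) as [k Hkk].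
  replace (r + 21 * q)%nat with m in Hkk by lia.
  rewrite Hf in Hkk.
  assert (Hs : r = 3%nat \/ r = 5%nat \/ r = 13%nat) by (apply (small r k); lia).
  destruct (Nat.Even_or_Odd q) as [[q' Hq]|[q' Hq]]; [| exfalso; lia].
  assert (Hz : Z.of_nat n - 2 = Z.of_nat r + 42 * Z.of_nat q') by lia.
  rewrite Hz.
  destruct Hs as [E|[E|E]]; rewrite E; [left|right;left|right;right];
    rewrite (Z.mul_comm 42), Z.mod_add by lia; reflexivity.
Qed.

Theorem mainTheorem3 (x : Z) (n : nat)
  (Hodd : Nat.odd n = true) (Hn : (5 <= n)%nat)
  (Heq : x ^ 2 + 7 = 2 ^ (Z.of_nat n)) :
  (Z.of_nat n - 2) mod 42 = 3 \/ (Z.of_nat n - 2) mod 42 = 5 \/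
  (Z.of_nat n - 2) mod 42 = 13.
Proof.
  destruct (Nat.odd_spec n) as [Ho _]. destruct (Ho Hodd) as [t Ht].
  set (m := (n - 2)%nat).
  assert (Hm : Z.of_nat n = Z.of_nat m + 2) by (unfold m; lia).
  rewrite Hm, Z.pow_add_r in Heq by lia.
  set (P := 2 ^ Z.of_nat m) in *.
  assert (HP : 2 ^ Z.of_nat m = P) by reflexivity.
  destruct (Z.Even_or_Odd x) as [[c Hc]|[c Hc]].
  { exfalso. subst x. change (2^2) with 4 in Heq. nia. }
  subst x. change (2^2) with 4 in Heq.
  destruct (key m c 1) as [s [Hs [[H1 H2]|[H1 H2]]]].
  - rewrite HP. nia.
  - intros [p [q [_ E]]]. lia.
  - assert (Hf : f m = 1 \/ f m = -1) by (unfold f; nia). clear H1 H2. exact (fin _ _ _ Ht Hn Hm Hf).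
  - assert (Hf : f m = 1 \/ f m = -1) by (unfold f; nia). clear H1 H2. exact (fin _ _ _ Ht Hn Hm Hf).
Qed.
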